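(* Let $A\subset\mathbb{Z}^n$ be a finite set with $0\in A$, let $c_\alpha\in\mathbb{C}^*$ for $\alpha\in A$, and let $\rho:A\to\mathbb{R}$ be the restriction to $A$ of a convex piecewise linear function $\hat\rho$ on $\mathrm{Conv}(A)$ whose maximal domains of linearity define a polyhedral decomposition $\mathcal{P}$ of $\mathrm{Conv}(A)$ with vertex set exactly $A$, all of whose cells are congruent under $GL(n,\mathbb{Z})$ to standard simplices. For $\tau>0$ consider the Laurent polynomial $$f(x_1,\dots,x_n)=\sum_{\alpha\in A}c_\alpha\tau^{\rho(\alpha)}x_1^{\alpha_1}\cdots x_n^{\alpha_n},$$ normalized so that its constant term $c_0\tau^{\rho(0)}$ equals $1$. Assume that $0$ is a vertex of every maximal cell of $\mathcal{P}$. Then, for $\tau$ sufficiently small, all the critical points of $f$ on $(\mathbb{C}^* )^n$ lie in $\mathcal{U}_0$, and the critical values of $f$ converge to $1$ as $\tau\to 0$.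
   Context: The tropicalization of $f$ is $\varphi(\xi)=\max\{\langle\alpha,\xi\rangle-\rho(\alpha)\,|\,\alpha\in A\}$ for $\xi\in\mathbb{R}^n$; $\Gamma\subset\mathbb{R}^n$ is the tropical hypersurface where this maximum is not achieved uniquely, and $\Delta_0$ is the component of $\mathbb{R}^n\setminus\Gamma$ on which the maximum is achieved by $\alpha=0$. The logarithm map is $\mathrm{Log}(x_1,\dots,x_n)=\frac{1}{|\log\tau|}(\log|x_1|,\dots,\log|x_n|)$, and $\mathcal{U}_0=\mathrm{Log}^{-1}(\Delta_0)\subset(\mathbb{C}^* )^n$ is the region where the constant term of $f$ dominates all other monomials of $f$. *)

(* Defs.v *)
From HB Require Import structures.
From mathcomp Require Import all_boot all_order all_algebra.
From mathcomp Require Import finmap.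
From mathcomp Require Import reals exp.
From mathcomp Require Export complex.

Set Implicit Arguments.
Unset Strict Implicit.
Unset Printing Implicit Defensive.

Import Order.TTheory GRing.Theory Num.Theory.
Local Open Scope ring_scope.


Section Defs.
Variable R : realType.
Variable n : nat.

Definition lat (a : 'rV[int]_n) : 'rV[R]_n := map_mx (fun z : int => z%:~R) a.

Definition pairing (a : 'rV[int]_n) (xi : 'rV[R]_n) : R :=
  \sum_(j < n) (a ord0 j)%:~R * xi ord0 j.

Definition dotR (m xi : 'rV[R]_n) : R := \sum_(j < n) m ord0 j * xi ord0 j.

Definition conv (S : {fset 'rV[int]_n}) (xi : 'rV[R]_n) : Prop :=
  exists lam : 'rV[int]_n -> R,
    (forall a, a \in S -> 0 <= lam a) /\
    \sum_(a <- S) lam a = 1 /\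
    xi = \sum_(a <- S) lam a *: lat a.

Definition convex_set (D : 'rV[R]_n -> Prop) : Prop :=
  forall x y t, D x -> D y -> 0 <= t <= 1 -> D (t *: x + (1 - t) *: y).

Definition convex_fun_on (D : 'rV[R]_n -> Prop) (g : 'rV[R]_n -> R) : Prop :=
  forall x y t, D x -> D y -> 0 <= t <= 1 ->
    g (t *: x + (1 - t) *: y) <= t * g x + (1 - t) * g y.

Definition affine_on (D : 'rV[R]_n -> Prop) (g : 'rV[R]_n -> R) : Prop :=
  exists (m : 'rV[R]_n) (b : R), forall xi, D xi -> g xi = dotR m xi + b.

(* sigma is the vertex set of a simplex congruent under (affine) GL(n,Z) to the
   standard simplex conv(0, e_1, ..., e_n): sigma = t + {0, e_1, ..., e_n} M *)
Definition unimodular_simplex (sigma : {fset 'rV[int]_n}) : Prop :=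
  exists (M : 'M[int]_n) (t : 'rV[int]_n),
    M \in unitmx /\
    forall v, (v \in sigma) = (v == t) || [exists i : 'I_n, v == t + row i M].

(* [cells] is the list of (vertex sets of the) maximal cells of the polyhedral
   decomposition P of Conv(A) given by the maximal domains of linearity of a
   convex piecewise linear function rhohat on Conv(A) with rhohat|_A = rho;
   the vertex set of P is exactly A and all cells are unimodular simplices. *)
Definition unimodular_regular_decomposition (A : {fset 'rV[int]_n})
    (rho : 'rV[int]_n -> R) (cells : seq {fset 'rV[int]_n}) : Prop :=
  exists rhohat : 'rV[R]_n -> R,
    [/\ convex_fun_on (conv A) rhohat,
        (forall a, a \in A -> rhohat (lat a) = rho a),
        (forall sigma, sigma \in cells ->
           [/\ (sigma `<=` A)%fset,
               unimodular_simplex sigma,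
               affine_on (conv sigma) rhohat &
               (* maximality of the domain of linearity *)
               forall D : 'rV[R]_n -> Prop,
                 convex_set D ->
                 (forall xi, conv sigma xi -> D xi) ->
                 (forall xi, D xi -> conv A xi) ->
                 affine_on D rhohat ->
                 forall xi, D xi -> conv sigma xi]),
        (forall xi, conv A xi <-> exists2 sigma, sigma \in cells & conv sigma xi) &
        (forall a, a \in A <-> exists2 sigma, sigma \in cells & a \in sigma)].

Definition monom (a : 'rV[int]_n) (x : 'rV[R[i]]_n) : R[i] :=
  \prod_(j < n) (x ord0 j) ^ (a ord0 j).

Definition laurent (A : {fset 'rV[int]_n}) (c : 'rV[int]_n -> R[i])
    (rho : 'rV[int]_n -> R) (tau : R) (x : 'rV[R[i]]_n) : R[i] :=
  \sum_(a <- A) c a * ((powR tau (rho a))%:C)%C * monom a x.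

Definition laurent_partial (A : {fset 'rV[int]_n}) (c : 'rV[int]_n -> R[i])
    (rho : 'rV[int]_n -> R) (tau : R) (j : 'I_n) (x : 'rV[R[i]]_n) : R[i] :=
  \sum_(a <- A) c a * ((powR tau (rho a))%:C)%C * (a ord0 j)%:~R *
     \prod_(k < n) (x ord0 k) ^ (a ord0 k - (k == j)%:Z).

Definition critical_point (A : {fset 'rV[int]_n}) (c : 'rV[int]_n -> R[i])
    (rho : 'rV[int]_n -> R) (tau : R) (x : 'rV[R[i]]_n) : Prop :=
  (forall j, x ord0 j != 0) /\ (forall j, laurent_partial A c rho tau j x = 0).

Definition Logmap (tau : R) (x : 'rV[R[i]]_n) : 'rV[R]_n :=
  \row_(j < n) (ln (Normc.normc (x ord0 j)) / `|ln tau|).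

(* Delta_0: the region where the maximum in the tropicalization
   phi(xi) = max_{alpha in A} (<alpha,xi> - rho(alpha)) is achieved (uniquely)
   by alpha = 0. *)
Definition in_Delta0 (A : {fset 'rV[int]_n}) (rho : 'rV[int]_n -> R)
    (xi : 'rV[R]_n) : Prop :=
  forall a, a \in A -> a != 0 -> pairing a xi - rho a < pairing 0 xi - rho 0.

Definition in_U0 (A : {fset 'rV[int]_n}) (rho : 'rV[int]_n -> R) (tau : R)
    (x : 'rV[R[i]]_n) : Prop :=
  (forall j, x ord0 j != 0) /\ in_Delta0 A rho (Logmap tau x).

End Defs.

(* Main.v *)
Require Import Defs.
From HB Require Import structures.
From mathcomp Require Import all_boot all_order all_algebra.
From mathcomp Require Import finmap.
From mathcomp Require Import reals exp.
From mathcomp Require Import complex.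
From mathcomp Require Import lra ring sequences.
Set Implicit Arguments.
Unset Strict Implicit.
Unset Printing Implicit Defensive.
Import Order.TTheory GRing.Theory Num.Theory.
Local Open Scope ring_scope.

Section Geo.
Variable R : realType.
Variable n : nat.
Local Notation lat := (@lat R n).
Local Notation dotR := (@dotR R n).
Local Notation conv := (@conv R n).

Lemma latD (a b : 'rV[int]_n) : lat (a + b) = lat a + lat b.
Proof. by apply/rowP => j; rewrite !mxE mulrzDr. Qed.

Lemma latB (a b : 'rV[int]_n) : lat (a - b) = lat a - lat b.
Proof. by apply/rowP => j; rewrite !mxE mulrzBr. Qed.

Lemma lat0 : lat 0 = 0.
Proof. by apply/rowP => j; rewrite !mxE. Qed.

Lemma lat_inj : injective lat.
Proof.
move=> a b /rowP H; apply/rowP => j; move: (H j); rewrite !mxE.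
by move/eqP; rewrite eqr_int => /eqP.
Qed.

Lemma pairingE (a : 'rV[int]_n) xi : pairing a xi = dotR (lat a) xi.
Proof. by rewrite /pairing /Defs.dotR; apply: eq_bigr => j _; rewrite mxE. Qed.

Lemma dotR_mx (u v : 'rV[R]_n) : dotR u v = (u *m v^T) 0 0.
Proof. by rewrite /Defs.dotR mxE; apply: eq_bigr => j _; rewrite mxE. Qed.

Lemma dotRDl u v w : dotR (u + v) w = dotR u w + dotR v w.
Proof. by rewrite !dotR_mx mulmxDl mxE. Qed.

Lemma dotRZl k u w : dotR (k *: u) w = k * dotR u w.
Proof. by rewrite !dotR_mx -scalemxAl mxE. Qed.

Lemma dotR0l w : dotR 0 w = 0.
Proof. by rewrite dotR_mx mul0mx mxE. Qed.

Lemma dotRBl u v w : dotR (u - v) w = dotR u w - dotR v w.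
Proof. by rewrite dotRDl -scaleN1r dotRZl mulN1r. Qed.

Lemma dotR_suml (I : Type) (s : seq I) (P : pred I) (F : I -> 'rV[R]_n) w :
  dotR (\sum_(i <- s | P i) F i) w = \sum_(i <- s | P i) dotR (F i) w.
Proof.
rewrite dotR_mx mulmx_suml summxE; apply: eq_bigr => i _.
by rewrite dotR_mx.
Qed.

Lemma dotRC u w : dotR u w = dotR w u.
Proof. by rewrite /Defs.dotR; apply: eq_bigr => j _; rewrite mulrC. Qed.

Lemma dotRDr u v w : dotR w (u + v) = dotR w u + dotR w v.
Proof. by rewrite !(dotRC w) dotRDl. Qed.

Lemma dotRZr k u w : dotR w (k *: u) = k * dotR w u.
Proof. by rewrite !(dotRC w) dotRZl. Qed.


Lemma sum_pred1_fset (T : choiceType) (V : lmodType R) (S : {fset T}) (c : T)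
   (F : T -> V) : c \in S -> \sum_(b <- S) (b == c)%:R *: F b = F c.
Proof.
move=> cS; rewrite (big_rem c) //= eqxx scale1r big1_seq ?addr0 //.
move=> b /andP[_]; rewrite mem_rem_uniq ?fset_uniq // => /andP[/= bc _].
by rewrite (negbTE bc) scale0r.
Qed.

Lemma sum_pred1_fsetR (T : choiceType) (S : {fset T}) (c : T)
   (F : T -> R) : c \in S -> \sum_(b <- S) (b == c)%:R * F b = F c.
Proof. by move=> cS; rewrite -(sum_pred1_fset (V := R^o) F cS). Qed.

Lemma conv_pt (S : {fset 'rV[int]_n}) a : a \in S -> conv S (lat a).
Proof.
move=> aS; exists (fun b => (b == a)%:R); split; first by move=> b _; rewrite ler0n.
split; last by rewrite sum_pred1_fset.
by rewrite -[RHS](sum_pred1_fsetR (fun=> 1) aS); apply: eq_bigr => b _; rewrite mulr1.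
Qed.

Lemma conv_convex (S : {fset 'rV[int]_n}) : convex_set (conv S).
Proof.
move=> x y t [lx [lx0 [lx1 ->]]] [ly [ly0 [ly1 ->]]] /andP[t0 t1].
exists (fun a => t * lx a + (1 - t) * ly a); split.
  move=> a aS; apply: addr_ge0; apply: mulr_ge0 => //; [exact: lx0|by rewrite subr_ge0|exact: ly0].
split.
  by rewrite big_split /= -!mulr_sumr lx1 ly1 !mulr1 addrC subrK.
rewrite !scaler_sumr -big_split /=; apply: eq_bigr => a _.
by rewrite !scalerA [RHS]scalerDl.
Qed.


Section Unimod.
Variables (sg : {fset 'rV[int]_n}) (M : 'M[int]_n) (t : 'rV[int]_n).
Hypothesis hM : M \in unitmx.
Hypothesis hs : forall v, (v \in sg) = (v == t) || [exists i, v == t + row i M].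
Definition Mr := map_mx (fun z : int => z%:~R : R) M.

Lemma Mr_unit : Mr \in unitmx.
Proof.
rewrite unitmxE /Mr (det_map_mx intr); apply: rmorph_unit.
by rewrite -unitmxE.
Qed.

Lemma row_lat i : lat (row i M) = row i Mr.
Proof. by rewrite /Defs.lat /Mr map_row. Qed.

Lemma rowM_inj i j : row i M = row j M -> i = j.
Proof.
rewrite !rowE => /(congr1 (fun A => A *m invmx M)); rewrite !mulmxK //.
move/(congr1 (fun A : 'M[int]_(1, n) => A 0 i)); rewrite !mxE eqxx /=.
  by rewrite eqxx; case: (i =P j) => // _ /eqP; rewrite ?mulr1n ?mulr0n oner_eq0.
Qed.

Lemma rowM_neq0 i : row i M != 0.
Proof.
apply/negP => /eqP; rewrite rowE => /(congr1 (fun A => A *m invmx M)).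
rewrite mulmxK // mul0mx => /(congr1 (fun A : 'M[int]_(1, n) => A 0 i)); rewrite !mxE eqxx /=.
by rewrite eqxx mulr1n => /eqP; rewrite oner_eq0.
Qed.

Lemma eq_t_row i : (t == t + row i M) = false.
Proof.
apply/negbTE/negP => /eqP H; move: (rowM_neq0 i); rewrite -[row i M](addKr t) -H.
by rewrite addNr eqxx.
Qed.

Lemma eq_row_row i j : (t + row j M == t + row i M) = (i == j).
Proof.
rewrite (inj_eq (addrI t)); apply/eqP/eqP => [/rowM_inj -> //|->//].
Qed.

Lemma sigma_lat b : b \in sg ->
  lat b = lat t + \sum_i (b == t + row i M)%:R *: row i Mr /\
  \sum_i ((b == t + row i M)%:R : R) <= 1.
Proof.
rewrite hs => /orP[/eqP ->|/existsP[j /eqP ->]].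
  split; last by rewrite big1 ?ler01 // => i _; rewrite eq_t_row.
  by rewrite big1 ?addr0 // => i _; rewrite eq_t_row scale0r.
split.
  rewrite latD row_lat (bigD1 j) //= eq_row_row eqxx scale1r big1 ?addr0 //.
  by move=> i /negbTE ij; rewrite eq_row_row ij scale0r.
rewrite (bigD1 j) //= eq_row_row eqxx big1 ?addr0 //.
by move=> i /negbTE ij; rewrite eq_row_row ij.
Qed.


Lemma baryE q : conv sg q -> exists mu : 'rV[R]_n,
  [/\ (forall i, 0 <= mu 0 i), \sum_i mu 0 i <= 1 & q = lat t + mu *m Mr].
Proof.
case=> lam [l0 [l1 ->]].
exists (\row_i \sum_(b <- sg) lam b * (b == t + row i M)%:R); split.
- move=> i; rewrite mxE big_seq; apply: sumr_ge0 => b bs.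
  by apply: mulr_ge0; [exact: l0|exact: ler0n].
- under eq_bigr do rewrite mxE.
  rewrite exchange_big /= -[X in _ <= X]l1 big_seq [X in _ <= X]big_seq.
  apply: ler_sum => b bs; rewrite -mulr_sumr; apply: ler_piMr; first exact: l0.
  exact: (sigma_lat bs).2.
- transitivity (\sum_(b <- sg) lam b *: (lat t + \sum_i (b == t + row i M)%:R *: row i Mr)).
    by rewrite big_seq [RHS]big_seq; apply: eq_bigr => b bs; rewrite -(sigma_lat bs).1.
  rewrite mulmx_sum_row; under [X in _ = _ + X]eq_bigr do rewrite mxE.
  rewrite (eq_bigr (fun b => lam b *: lat t + \sum_i (lam b * (b == t + row i M)%:R) *: row i Mr)); last first.
    by move=> b _; rewrite scalerDr scaler_sumr; congr (_ + _); apply: eq_bigr => i _; rewrite scalerA.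
  rewrite big_split /= -scaler_suml l1 scale1r; congr (_ + _).
  rewrite exchange_big /=; apply: eq_bigr => i _; by rewrite scaler_suml.
Qed.

Lemma t_in : t \in sg.
Proof. by rewrite hs eqxx. Qed.

Lemma tr_in i : t + row i M \in sg.
Proof. by rewrite hs; apply/orP; right; apply/existsP; exists i. Qed.

Lemma baryI (mu : 'rV[R]_n) : (forall i, 0 <= mu 0 i) -> \sum_i mu 0 i <= 1 ->
  conv sg (lat t + mu *m Mr).
Proof.
move=> mu0 mu1.
exists (fun b => (b == t)%:R * (1 - \sum_i mu 0 i) + \sum_i (b == t + row i M)%:R * mu 0 i).
split.
  move=> b _; apply: addr_ge0; first by apply: mulr_ge0; rewrite ?ler0n ?subr_ge0.
  by apply: sumr_ge0 => i _; apply: mulr_ge0.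
split.
  rewrite big_split /= sum_pred1_fsetR ?t_in // exchange_big /=.
  rewrite [X in _ + X](eq_bigr (fun i => mu 0 i)); first by rewrite subrK.
  by move=> i _; rewrite sum_pred1_fsetR ?tr_in.
rewrite (eq_bigr (fun b => (b == t)%:R *: ((1 - \sum_i mu 0 i) *: lat b) +
   \sum_i (b == t + row i M)%:R *: (mu 0 i *: lat b))); last first.
  by move=> b _; rewrite [LHS]scalerDl [in LHS]scaler_suml -scalerA; congr (_ + _); apply: eq_bigr => i _; rewrite scalerA.
rewrite big_split /= sum_pred1_fset ?t_in // exchange_big /=.
rewrite (eq_bigr (fun i => mu 0 i *: lat t + mu 0 i *: row i Mr)); last first.
  by move=> i _; rewrite sum_pred1_fset ?tr_in // latD row_lat scalerDr.
rewrite big_split /= -scaler_suml mulmx_sum_row addrA -scalerDl subrK scale1r.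
by congr (_ + _); apply: eq_bigr => i _; rewrite mxE.
Qed.

Lemma lattice a : conv sg (lat a) -> a \in sg.
Proof.
case/baryE => mu [mu0 mu1 Ea].
pose nu := (a - t) *m invmx M.
have anu : a - t = nu *m M by rewrite /nu mulmxKV.
have Hl : lat (a - t) = lat nu *m Mr by rewrite anu /Defs.lat /Mr (map_mxM intr).
have munu : mu = lat nu.
  have : mu *m Mr = lat nu *m Mr by rewrite -Hl latB Ea addrC addKr.
  move/(congr1 (fun X => X *m invmx Mr)); rewrite !mulmxK //; exact: Mr_unit.
have nu0 i : 0 <= nu 0 i by move: (mu0 i); rewrite munu mxE ler0z.
have nu1 : \sum_i nu 0 i <= 1.
  move: mu1; rewrite munu; under eq_bigr do rewrite mxE.
  by rewrite -(rmorph_sum intr) /= -[X in _ <= X]/(1%:~R) ler_int.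
have [/eqP s0|s0] := eqVneq (\sum_i nu 0 i) 0.
  have nuz : nu = 0.
    by apply/rowP => i; rewrite [RHS]mxE; exact: (psumr_eq0P (fun j _ => nu0 j) (eqP s0)).
  move: anu; rewrite nuz mul0mx => /eqP; rewrite subr_eq0 => /eqP ->.
  exact: t_in.
have [j nj] : exists j, nu 0 j != 0.
  apply/existsP; apply: contraT; rewrite negb_exists => /forallP H.
  by move: s0; rewrite big1 ?eqxx // => i _; apply/eqP; move: (H i); rewrite negbK.
have nuj1 : nu 0 j = 1.
  apply/eqP; rewrite eq_le; apply/andP; split.
    apply: le_trans nu1; rewrite (bigD1 j) //= lerDl; exact: sumr_ge0.
  by rewrite -gtz0_ge1 lt_def nj nu0.
have rest : \sum_(i | i != j) nu 0 i = 0.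
  apply/eqP; rewrite eq_le sumr_ge0 // andbT.
  by move: nu1; rewrite (bigD1 j) //= nuj1 -lerBrDl subrr.
have nuE : nu = delta_mx 0 j.
  apply/rowP => i; rewrite [RHS]mxE /=; case: (eqVneq i j) => [->|ij]; first by rewrite nuj1 ?eqxx.
  exact: (psumr_eq0P (fun j _ => nu0 j) rest).
move: anu; rewrite nuE -rowE => E.
by rewrite -[a](subrK t) E addrC; exact: tr_in.
Qed.


Lemma interp (f : 'rV[int]_n -> R) : exists (g : 'rV[R]_n) (be : R),
  forall b, b \in sg -> dotR (lat b) g + be = f b.
Proof.
pose d : 'cV[R]_n := \col_i (f (t + row i M) - f t).
pose g := (invmx Mr *m d)^T.
have gi i : dotR (row i Mr) g = f (t + row i M) - f t.
  rewrite dotR_mx /g trmxK -row_mul mulmxA mulmxV ?mul1mx; last exact: Mr_unit.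
  by rewrite !mxE.
exists g, (f t - dotR (lat t) g) => b; rewrite hs => /orP[/eqP ->|/existsP[j /eqP ->]].
  by rewrite addrC subrK.
by rewrite latD row_lat dotRDl gi; ring.
Qed.

End Unimod.


Lemma uniform_pos (T : eqType) (s : seq T) (P : T -> R -> Prop) :
  (forall x e e', P x e -> 0 < e' <= e -> P x e') ->
  (forall x, x \in s -> exists2 e, 0 < e & P x e) ->
  exists2 e, 0 < e & forall x, x \in s -> P x e.
Proof.
move=> Pmon; elim: s => [|x s IH] H; first by exists 1.
have [e1 e10 Pe1] := H x (mem_head _ _).
have [e2 e20 Pe2] := IH (fun y ys => H y (ltac:(by rewrite in_cons ys orbT))).
exists (Num.min e1 e2); first by rewrite lt_min e10 e20.
move=> y; rewrite in_cons => /orP[/eqP ->|ys].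
  by apply: Pmon Pe1 _; rewrite lt_min e10 e20 ge_min lexx.
by apply: Pmon (Pe2 _ ys) _; rewrite lt_min e10 e20 ge_min lexx orbT.
Qed.

Lemma uniform_bound (T : eqType) (s : seq T) (P : T -> R -> Prop) :
  (forall x e e', P x e -> e <= e' -> P x e') ->
  (forall x, x \in s -> exists e, P x e) ->
  exists e, forall x, x \in s -> P x e.
Proof.
move=> Pmon; elim: s => [|x s IH] H; first by exists 0.
have [e1 Pe1] := H x (mem_head _ _).
have [e2 Pe2] := IH (fun y ys => H y (ltac:(by rewrite in_cons ys orbT))).
exists (Num.max e1 e2) => y; rewrite in_cons => /orP[/eqP ->|ys].
  by apply: Pmon Pe1 _; rewrite le_max lexx.
by apply: Pmon (Pe2 _ ys) _; rewrite le_max lexx orbT.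
Qed.

Section Decomp.
Variables (A : {fset 'rV[int]_n}) (rho : 'rV[int]_n -> R)
  (cells : seq {fset 'rV[int]_n}) (rhohat : 'rV[R]_n -> R).
Hypothesis hconv : convex_fun_on (conv A) rhohat.
Hypothesis hrho : forall a, a \in A -> rhohat (lat a) = rho a.
Hypothesis hcells : forall sigma, sigma \in cells ->
           [/\ (sigma `<=` A)%fset,
               unimodular_simplex sigma,
               affine_on (conv sigma) rhohat &
               forall D : 'rV[R]_n -> Prop,
                 convex_set D ->
                 (forall xi, conv sigma xi -> D xi) ->
                 (forall xi, D xi -> conv A xi) ->
                 affine_on D rhohat ->
                 forall xi, D xi -> conv sigma xi].
Hypothesis hcover : forall xi, conv A xi <-> exists2 sigma, sigma \in cells & conv sigma xi.

Lemma conv_sub sg xi : sg \in cells -> conv sg xi -> conv A xi.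
Proof. by move=> sc cx; apply/hcover; exists sg. Qed.

Lemma support sg m b : sg \in cells ->
  (forall xi, conv sg xi -> rhohat xi = dotR m xi + b) ->
  forall p, conv A p -> dotR m p + b <= rhohat p.
Proof.
move=> sc hrep p pA.
have [_ [M [t [hM hs]]] _ _] := hcells sc.
pose c0 : R := (n.+1%:R)^-1.
have c0gt : 0 < c0 by rewrite invr_gt0 ltr0n.
have nc0 : n%:R * c0 = 1 - c0.
  have hn : (n%:R + 1 : R) != 0 by rewrite natr1 pnatr_eq0.
  by rewrite /c0 -natr1; field.
pose mu0 : 'rV[R]_n := const_mx c0.
have smu0 : \sum_i mu0 0 i = n%:R * c0.
  by rewrite (eq_bigr (fun=> c0)) ?sumr_const ?card_ord ?mulr_natl // => i _; rewrite mxE.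
pose q0 := lat t + mu0 *m Mr M.
have q0s : conv sg q0.
  apply: baryI => //; first by move=> i; rewrite mxE ltW.
  by rewrite smu0 nc0; lra.
pose mup := (p - lat t) *m invmx (Mr M).
have pE : p = lat t + mup *m Mr M.
  by rewrite /mup (mulmxKV (Mr_unit hM)) addrC subrK.
clearbody mup.
pose K := 1 + \sum_i `|mup 0 i|.
have K1 : 1 <= K by rewrite lerDl sumr_ge0.
pose s := c0 / (K + c0).
have Kc : 0 < K + c0 by lra.
have s0 : 0 < s by rewrite divr_gt0.
have sK : s * (K + c0) = c0 by rewrite /s mulfVK // gt_eqF.
have s1 : s < 1.
  by rewrite /s ltr_pdivrMr // mul1r; lra.
pose mur := s *: mup + (1 - s) *: mu0.
have rE : s *: p + (1 - s) *: q0 = lat t + mur *m Mr M.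
  rewrite pE /q0 /mur mulmxDl -!scalemxAl !scalerDr addrACA -scalerDl.
  by rewrite [s + _]addrC subrK scale1r.
have rs : conv sg (s *: p + (1 - s) *: q0).
  rewrite rE; apply: baryI => //.
    move=> i; rewrite !mxE.
    have : - K <= mup 0 i.
      have : `|mup 0 i| <= K.
        rewrite /K (bigD1 i) //=.
        have : 0 <= \sum_(j | j != i) `|mup 0 j| by apply: sumr_ge0.
        lra.
      by rewrite ler_norml => /andP[].
    move=> hK; have hK' : 0 <= mup 0 i + K by lra.
    have := mulr_ge0 (ltW s0) hK'; move: sK; lra.
  rewrite (eq_bigr (fun i => s * mup 0 i + (1 - s) * c0)); last by move=> i _; rewrite !mxE.
  rewrite big_split /= -mulr_sumr sumr_const card_ord -mulr_natr.
  have : \sum_i mup 0 i <= K - 1.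
    rewrite /K addrC addKr; apply: ler_sum => i _; exact: ler_norm.
  move=> hS; have h1 := ler_wpM2l (ltW s0) hS.
  have nc0' : c0 * n%:R = 1 - c0 by rewrite mulrC.
  have h2 : s * (c0 * n%:R) = s * (1 - c0) by rewrite nc0'.
  move: sK h1 h2 nc0'; lra.
have st : 0 <= s <= 1 by rewrite (ltW s0) (ltW s1).
have H := hconv pA (conv_sub sc q0s) st.
rewrite (hrep _ rs) (hrep _ q0s) dotRDr !dotRZr in H.
have : s * (dotR m p + b) <= s * rhohat p by lra.
by rewrite ler_pM2l.
Qed.


Lemma gap sg m b : sg \in cells ->
  (forall xi, conv sg xi -> rhohat xi = dotR m xi + b) ->
  forall a, a \in A -> a \notin sg -> dotR m (lat a) + b < rho a.
Proof.
move=> sc hrep a aA asg; rewrite ltNge; apply/negP => Hle.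
have [_ [M [t [hM hs]]] _ hmax] := hcells sc.
pose D := fun q => conv A q /\ rhohat q <= dotR m q + b.
have : conv sg (lat a).
  apply: (hmax D).
  - move=> x y s [xA xl] [yA yl] s01; split; first exact: conv_convex.
    have := hconv xA yA s01; rewrite dotRDr !dotRZr.
    case/andP: s01 => s0 s1.
    have h1 := ler_wpM2l s0 xl.
    have h2 := ler_wpM2l (_ : 0 <= 1 - s) yl.
    have s1' : 0 <= 1 - s by rewrite subr_ge0.
    move: (h2 s1'); lra.
  - by move=> xi cx; split; [exact: conv_sub sc cx | rewrite hrep].
  - by move=> xi [].
  - exists m, b => xi [xA xl]; apply/eqP; rewrite eq_le xl /=.
    exact: (support sc hrep xA).
  - by split; [exact: conv_pt | rewrite hrho].
move/(lattice hM hs); by rewrite (negbTE asg).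
Qed.


Lemma eps_gap : exists2 eps, 0 < eps & forall sg, sg \in cells ->
  exists m b, (forall xi, conv sg xi -> rhohat xi = dotR m xi + b) /\
    forall a, a \in A -> a \notin sg -> dotR m (lat a) + b + eps <= rho a.
Proof.
apply: uniform_pos.
  move=> sg e e' [m [b [h1 h2]]] /andP[_ ee]; exists m, b; split => // a aA asg.
  by apply: le_trans (h2 a aA asg); rewrite lerD2l.
move=> sg sc; have [_ _ [m [b hrep]] _] := hcells sc.
have [e e0 He] : exists2 e, 0 < e & forall a, a \in (A : seq _) -> a \notin sg ->
    dotR m (lat a) + b + e <= rho a.
  apply: uniform_pos.
    by move=> a e e' h /andP[_ ee] asg; apply: le_trans (h asg); rewrite lerD2l.
  move=> a aA; case: (boolP (a \in sg)) => asg; first by exists 1.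
  exists (rho a - (dotR m (lat a) + b)); first by rewrite subr_gt0 (gap sc hrep).
  by move=> _; rewrite addrC subrK.
by exists e => //; exists m, b; split.
Qed.

Definition vv (xi : 'rV[R]_n) (a : 'rV[int]_n) := pairing a xi - rho a.

Hypothesis hsub : forall sg, sg \in cells -> (sg `<=` A)%fset.

Lemma trop : exists2 delta, 0 < delta & forall xi ast, ast \in A ->
  (forall b, b \in A -> vv xi b <= vv xi ast) ->
  exists2 sg, sg \in cells & forall a, a \in A -> a \notin sg ->
     vv xi a + delta <= vv xi ast.
Proof.
have [eps eps0 Heps] := eps_gap.
pose N : R := \sum_(a <- A) 1.
have N0 : 0 <= N by apply: sumr_ge0.
exists (eps / (N + 1)); first by rewrite divr_gt0 // ltr_wpDl.
set delta := eps / (N + 1).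
move=> xi ast asA asmax.
set mx := vv xi ast.
pose P := fun a => mx - delta < vv xi a.
pose cnt : R := \sum_(a <- A | P a) 1.
have d0 : 0 < delta by rewrite divr_gt0 // ltr_wpDl.
have cnt1 : 1 <= cnt.
  rewrite /cnt (big_rem ast) //= /P ifT; last by rewrite ltrBlDr ltrDl.
  by rewrite lerDl sumr_ge0.
have cnt0 : 0 < cnt by apply: lt_le_trans cnt1.
have cntN : cnt <= N.
  rewrite /cnt /N big_mkcond /=; apply: ler_sum => a _; case: ifP => // _; exact: ler01.
pose p := cnt^-1 *: \sum_(a <- A | P a) lat a.
have pA : conv A p.
  exists (fun a => if P a then cnt^-1 else 0); split.
    by move=> a _; case: ifP => // _; rewrite invr_ge0 ltW.
  split.
    by rewrite -big_mkcond /= -[X in _ = X](mulVf (lt0r_neq0 cnt0)) mulr_sumr mulr1.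
  rewrite /p scaler_sumr big_mkcond /=; apply: eq_bigr => a _.
  by case: ifP => // _; rewrite scale0r.
have [sg sc psg] := (hcover p).1 pA.
have [m [b [hrep hgap]]] := Heps sg sc.
have sgA := hsub sc.
have rhosg c : c \in sg -> rho c = dotR m (lat c) + b.
  move=> cs; rewrite -hrho; last exact: (fsubsetP sgA).
  by apply: hrep; apply: conv_pt.
have gap0 a : a \in A -> 0 <= rho a - (dotR m (lat a) + b).
  move=> aA; case: (boolP (a \in sg)) => asg; first by rewrite rhosg // subrr.
  have := hgap a aA asg; have := eps0; lra.
have hp : dotR p xi - dotR m p - b <= mx.
  case: psg => lam [l0 [l1 pE]].
  rewrite pE dotR_suml dotRC dotR_suml.
  rewrite (eq_bigr (fun c => lam c * dotR (lat c) xi)); last by move=> c _; rewrite dotRZl.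
  rewrite [X in _ - X - _](eq_bigr (fun c => lam c * dotR m (lat c))); last first.
    by move=> c _; rewrite dotRZl dotRC.
  rewrite -[b]mul1r -l1 mulr_suml -!sumrB.
  rewrite -[mx]mul1r -l1 mulr_suml big_seq [X in _ <= X]big_seq.
  apply: ler_sum => c cs.
  have := asmax c (fsubsetP sgA c cs); rewrite /vv pairingE (rhosg c cs) -/mx => hc.
  rewrite -!mulrBr; apply: ler_wpM2l; [exact: l0 | move: hc; rewrite /mx /vv; lra].
exists sg => // a0 a0A a0sg; rewrite leNgt; apply/negP => Ha0.
pose F a := dotR (lat a) xi - dotR m (lat a) - b.
have e1 : dotR p xi = cnt^-1 * \sum_(a <- A | P a) dotR (lat a) xi by rewrite /p dotRZl dotR_suml.
have e2 : dotR m p = cnt^-1 * \sum_(a <- A | P a) dotR m (lat a).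
  rewrite /p dotRZr; congr (_ * _); rewrite dotRC dotR_suml; apply: eq_bigr => a _; exact: dotRC.
have e3 : \sum_(a <- A | P a) F a = \sum_(a <- A | P a) dotR (lat a) xi
     - \sum_(a <- A | P a) dotR m (lat a) - cnt * b.
  rewrite /F !sumrB /cnt mulr_suml; congr (_ - _); apply: eq_bigr => a _; by rewrite mul1r.
have key : \sum_(a <- A | P a) F a <= cnt * mx.
  have := ler_wpM2l (ltW cnt0) hp; rewrite e1 e2 e3 !mulrBr !mulrA mulfV ?lt0r_neq0 // !mul1r.
  by [].
have lb1 : cnt * (mx - delta) <= \sum_(a <- A | P a) vv xi a.
  rewrite /cnt mulr_suml; apply: ler_sum => a Pa; rewrite mul1r; exact: ltW.
have lb2 : eps <= \sum_(a <- A | P a) (rho a - (dotR m (lat a) + b)).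
  rewrite (big_rem a0) //= ifT; last by rewrite /P ltrBlDr.
  have := hgap a0 a0A a0sg.
  have : 0 <= \sum_(y <- rem a0 A | P y) (rho y - (dotR m (lat y) + b)).
    rewrite big_seq_cond; apply: sumr_ge0 => a /andP[aA _]; apply: gap0.
    exact: (mem_rem aA).
  lra.
have split : \sum_(a <- A | P a) F a = \sum_(a <- A | P a) vv xi a +
   \sum_(a <- A | P a) (rho a - (dotR m (lat a) + b)).
  rewrite -big_split /=; apply: eq_bigr => a _; rewrite /F /vv pairingE; ring.
have hdel : delta * (N + 1) = eps by rewrite /delta mulfVK // lt0r_neq0 // ltr_wpDl.
have h := ler_wpM2r (ltW d0) cntN.
move: key lb1 lb2 split hdel h; lra.
Qed.


End Decomp.

End Geo.
Import Normc.

Section Ana.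
Variable R : realType.

Lemma normc_ge0 (z : R[i]) : 0 <= normc z.
Proof. by case: z => a b; rewrite /normc sqrtr_ge0. Qed.

Lemma normc_real (r : R) : normc (r%:C)%C = `|r|.
Proof. by rewrite /normc /= expr0n /= addr0 sqrtr_sqr. Qed.

Lemma normcXn (z : R[i]) k : normc (z ^+ k) = normc z ^+ k.
Proof. by elim: k => [|k IH]; rewrite ?expr0 ?normc1 // !exprS normcM IH. Qed.

Lemma normcXz (z : R[i]) (k : int) : normc (z ^ k) = normc z ^ k.
Proof. by case: k => k; rewrite ?normcV normcXn. Qed.

Lemma normc_prod (I : Type) (s : seq I) (F : I -> R[i]) :
  normc (\prod_(i <- s) F i) = \prod_(i <- s) normc (F i).
Proof.
elim: s => [|x s IH]; first by rewrite !big_nil normc1.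
by rewrite !big_cons normcM IH.
Qed.

Lemma normc_sum (I : Type) (s : seq I) (F : I -> R[i]) :
  normc (\sum_(i <- s) F i) <= \sum_(i <- s) normc (F i).
Proof.
elim: s => [|x s IH]; first by rewrite !big_nil normc0.
rewrite !big_cons.
have := le_normcD (F x) (\sum_(i <- s) F i); move: IH.
set u := normc _; set v := normc _; set w := normc _; set z := \sum_(i <- s) _.
lra.
Qed.

Lemma normc_sumP (I : Type) (s : seq I) (P : pred I) (F : I -> R[i]) :
  normc (\sum_(i <- s | P i) F i) <= \sum_(i <- s | P i) normc (F i).
Proof.
rewrite -big_filter -[X in _ <= X]big_filter; exact: normc_sum.
Qed.

Lemma exists_argmax (T : eqType) (s : seq T) (f : T -> R) x : x \in s ->
  exists2 y, y \in s & forall z, z \in s -> f z <= f y.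
Proof.
elim: s x => [//|y s IH] x _.
case: s IH => [|u s] IH.
  by exists y; [exact: mem_head | move=> z; rewrite in_cons in_nil orbF => /eqP ->].
have [w ws Hw] := IH u (mem_head u s).
case: (lerP (f y) (f w)) => hyw.
  exists w; first by rewrite in_cons ws orbT.
  by move=> z; rewrite in_cons => /orP[/eqP ->|/Hw].
exists y; first exact: mem_head.
by move=> z; rewrite in_cons => /orP[/eqP ->|/Hw /le_trans]; [|apply; apply: ltW].
Qed.

Lemma small_tau (d th : R) : 0 < d -> 0 < th ->
  exists2 t0, 0 < t0 & forall tau, 0 < tau < t0 -> tau < 1 /\ expR (d * ln tau) < th.
Proof.
move=> d0 th0; exists (Num.min 1 (expR (ln th / d))).
  by rewrite lt_min ltr01 expR_gt0.
move=> tau /andP[t0 /[dup] ht]; rewrite lt_min => /andP[t1 t2]; split => //.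
have : ln tau < ln th / d.
  by rewrite -[X in _ < X]expRK ltr_ln // posrE expR_gt0.
rewrite ltr_pdivlMr // => h.
by rewrite -[th]lnK ?posrE // ltr_expR mulrC.
Qed.


Section Crit.
Variables (n : nat) (A : {fset 'rV[int]_n}) (c : 'rV[int]_n -> R[i])
  (rho : 'rV[int]_n -> R) (tau : R) (x : 'rV[R[i]]_n).
Hypotheses (tau0 : 0 < tau) (tau1 : tau < 1) (hx : forall j, x 0 j != 0).

Definition ww a := c a * ((powR tau (rho a))%:C)%C * monom a x.
Definition LL := - ln tau.
Definition xix := Logmap tau x.

Lemma LL_gt0 : 0 < LL.
Proof. by rewrite /LL oppr_gt0 ln_lt0 // tau0 tau1. Qed.

Lemma absln : `|ln tau| = LL.
Proof. by rewrite ler0_norm // ltW // ln_lt0 // tau0 tau1. Qed.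

Lemma normx_gt0 j : 0 < normc (x 0 j).
Proof.
rewrite lt_def normc_ge0 andbT; apply/negP => /eqP /eq0_normc H.
by move: (hx j); rewrite H eqxx.
Qed.

Lemma normc_monom a : normc (monom a x) = expR (LL * pairing a xix).
Proof.
rewrite /monom normc_prod.
rewrite (eq_bigr (fun j => expR ((a 0 j)%:~R * ln (normc (x 0 j))))); last first.
  move=> j _; rewrite normcXz -powR_intmul ?normc_ge0 // /powR.
  by rewrite (negbTE (lt0r_neq0 (normx_gt0 j))).
rewrite -expR_sum /pairing mulr_sumr; congr expR; apply: eq_bigr => j _.
rewrite /xix /Logmap mxE absln.
have := LL_gt0 => hL.
by field; rewrite lt0r_neq0.
Qed.

Lemma normc_powC r : normc ((powR tau r)%:C)%C = expR (- (LL * r)).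
Proof.
rewrite normc_real ger0_norm ?powR_ge0 // /powR (negbTE (lt0r_neq0 tau0)) /LL.
by congr expR; ring.
Qed.

Lemma normc_ww a : normc (ww a) = normc (c a) * expR (LL * vv rho xix a).
Proof.
rewrite /ww !normcM normc_powC normc_monom -mulrA -expRD /vv.
by congr (_ * expR _); ring.
Qed.

Lemma crit_sum : critical_point A c rho tau x ->
  forall g : 'rV[R]_n, \sum_(a <- A) ww a * ((dotR (lat R a) g)%:C)%C = 0.
Proof.
case=> _ hp g.
have hj j : \sum_(a <- A) ww a * (a 0 j)%:~R = 0.
  have := hp j; rewrite /laurent_partial => H.
  have -> : \sum_(a <- A) ww a * (a 0 j)%:~R =
      (\sum_(a <- A) c a * ((powR tau (rho a))%:C)%C * (a 0 j)%:~R *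
        \prod_(k < n) x 0 k ^ (a 0 k - (k == j)%:Z)) * x 0 j.
    rewrite mulr_suml; apply: eq_bigr => a _.
    rewrite /ww /monom -!mulrA; congr (_ * (_ * _)).
    rewrite [RHS]mulrC; congr (_ * _).
    rewrite (bigD1 j) //= [in RHS](bigD1 j) //= eqxx.
    rewrite [in RHS](eq_bigr (fun k => x 0 k ^ (a 0 k))); last first.
      by move=> k /negbTE ->; rewrite subr0.
    rewrite mulrAC; congr (_ * _).
    by rewrite expfzDr ?hx // exprN1 mulfVK ?hx.
  by rewrite H mul0r.
rewrite (eq_bigr (fun a => \sum_(j < n) ww a * (a 0 j)%:~R * (g 0 j)%:C%C)); last first.
  move=> a _; rewrite /dotR rmorph_sum mulr_sumr; apply: eq_bigr => j _.
  by rewrite rmorphM /= mxE rmorph_int mulrA.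
rewrite exchange_big /= big1 // => j _.
by rewrite -mulr_suml hj mul0r.
Qed.

End Crit.

End Ana.
Import Normc.

Theorem lemma5p2 (R : realType) (n : nat) (A : {fset 'rV[int]_n})
    (c : 'rV[int]_n -> R[i]) (rho : 'rV[int]_n -> R)
    (cells : seq {fset 'rV[int]_n}) :
  0 \in A ->
  (forall a, a \in A -> c a != 0) ->
  unimodular_regular_decomposition A rho cells ->
  (forall tau : R, 0 < tau -> c 0 * ((powR tau (rho 0))%:C)%C = 1) ->
  (forall sigma, sigma \in cells -> 0 \in sigma) ->
  (exists2 tau0 : R, 0 < tau0 &
     forall tau : R, 0 < tau < tau0 ->
       forall x, critical_point A c rho tau x -> in_U0 A rho tau x) /\
  (forall eps : R, 0 < eps -> exists2 delta : R, 0 < delta &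
     forall tau : R, 0 < tau < delta ->
       forall x, critical_point A c rho tau x ->
         Normc.normc (laurent A c rho tau x - 1) < eps).
Proof.
move=> h0A hc hdec hnorm h0cells.
case: hdec => rhohat [hconv hrho hcells hcover hAc].
have hsub sg : sg \in cells -> (sg `<=` A)%fset by case/hcells.
have [dl dl0 Htrop] := trop hconv hrho hcells hcover hsub.
have c01 : c 0 = 1.
  by have := hnorm 1 ltr01; rewrite powR1 mulr1.
have rho00 : rho 0 = 0.
  have := hnorm (expR 1) (expR_gt0 _); rewrite c01 mul1r /powR.
  rewrite (negbTE (lt0r_neq0 (expR_gt0 _))) expRK mulr1 => /(congr1 (@complex.Re R)) /= H.
  by apply: expR_inj; rewrite expR0.
have [cmin cmin0 Hcmin] : exists2 cm, 0 < cm & forall a, a \in (A : seq _) -> cm <= normc (c a).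
  apply: uniform_pos; first by move=> a e e' h /andP[_ /le_trans]; apply.
  move=> a aA; exists (normc (c a)) => //.
  rewrite lt_def normc_ge0 andbT; apply/negP => /eqP /eq0_normc ca.
  by move: (hc a aA); rewrite ca eqxx.
have [Kb HKb] : exists Kb, forall sg, sg \in cells -> 0 <= Kb /\
    forall b0, b0 \in sg -> b0 != 0 -> exists g : 'rV[R]_n,
      (forall b, b \in sg -> dotR (lat R b) g = (b == b0)%:R) /\
      \sum_(a <- A) normc (c a) * `|dotR (lat R a) g| <= Kb.
  apply: (@uniform_bound R _ cells (fun sg Kb => 0 <= Kb /\
    forall b0, b0 \in sg -> b0 != 0 -> exists g : 'rV[R]_n,
      (forall b, b \in sg -> dotR (lat R b) g = (b == b0)%:R) /\
      \sum_(a <- A) normc (c a) * `|dotR (lat R a) g| <= Kb)).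
    move=> sg K K' [K0 h] KK'; split; first exact: le_trans KK'.
    move=> b0 b0s b00; have [g [g1 g2]] := h b0 b0s b00; exists g; split => //.
    exact: le_trans KK'.
  move=> sg sc; have [_ [M [t [hM hs]]] _ _] := hcells sg sc.
  have [K HK] : exists K, forall b0, b0 \in (sg : seq _) -> b0 != 0 -> exists g : 'rV[R]_n,
      (forall b, b \in sg -> dotR (lat R b) g = (b == b0)%:R) /\
      \sum_(a <- A) normc (c a) * `|dotR (lat R a) g| <= K.
    apply: (@uniform_bound R _ sg (fun b0 K => b0 != 0 -> exists g : 'rV[R]_n,
      (forall b, b \in sg -> dotR (lat R b) g = (b == b0)%:R) /\
      \sum_(a <- A) normc (c a) * `|dotR (lat R a) g| <= K)).
      move=> b0 K K' h KK' b0s; have [g [g1 g2]] := h b0s; exists g; split => //.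
      exact: le_trans KK'.
    move=> b0 b0s; have [g [be Hg]] := interp (R:=R) hM hs (fun b => (b == b0)%:R).
    exists (\sum_(a <- A) normc (c a) * `|dotR (lat R a) g|) => b00; exists g; split => //.
    have be0 : be = 0.
      by have := Hg 0 (h0cells sg sc); rewrite lat0 dotR0l add0r eq_sym (negbTE b00).
    by move=> b bs; rewrite -(Hg b bs) be0 addr0.
  exists (Num.max K 0); split; first by rewrite le_max lexx orbT.
  move=> b0 b0s b00; have [g [g1 g2]] := HK b0 b0s b00; exists g; split => //.
  by apply: le_trans g2 _; rewrite le_max lexx.
have Bnd : forall tau x, 0 < tau -> tau < 1 -> critical_point A c rho tau x ->
  forall ast sg, sg \in cells ->
  (forall a, a \in A -> a \notin sg -> vv rho (xix tau x) a + dl <= vv rho (xix tau x) ast) ->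
  forall b0, b0 \in sg -> b0 != 0 ->
  normc (ww c rho tau x b0) <= Kb * expR (LL tau * (vv rho (xix tau x) ast - dl)).
  move=> tau x t0 t1 hcr ast sg sc hsg b0 b0s b00.
  have hx := hcr.1.
  have [Kb0 Hg] := HKb sg sc; have [g [g1 g2]] := Hg b0 b0s b00.
  have H := crit_sum hx hcr g.
  rewrite (bigID (fun a => a \in sg)) /= in H.
  have b0A : b0 \in A by apply: (fsubsetP (hsub sg sc)).
  have E1 : \sum_(a <- A | a \in sg) ww c rho tau x a * ((dotR (lat R a) g)%:C)%C
      = ww c rho tau x b0.
    rewrite (big_rem b0) //= b0s g1 // eqxx rmorph1 mulr1 big1_seq ?addr0 //.
    move=> a /andP[asg]; rewrite mem_rem_uniq ?fset_uniq // => /andP[/= ab _].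
    by rewrite g1 // (negbTE ab) rmorph0 mulr0.
  rewrite E1 in H.
  have E2 : ww c rho tau x b0 = - \sum_(a <- A | a \notin sg) ww c rho tau x a * ((dotR (lat R a) g)%:C)%C.
    by apply/eqP; rewrite -addr_eq0 H.
  rewrite E2 normcN.
  set E := expR (LL tau * (vv rho (xix tau x) ast - dl)).
  have E0 : 0 <= E by apply: expR_ge0.
  apply: le_trans (normc_sumP _ _ _) _.
  apply: (@le_trans _ _ (\sum_(a <- A | a \notin sg) E * (normc (c a) * `|dotR (lat R a) g|))).
    rewrite big_seq_cond [X in _ <= X]big_seq_cond; apply: ler_sum => a /andP[aA asg].
    rewrite normcM normc_real normc_ww // mulrA [E * _]mulrC; apply: ler_wpM2r => //.
    apply: ler_wpM2l; first exact: normc_ge0.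
    rewrite ler_expR; apply: ler_wpM2l; first exact: ltW (LL_gt0 t0 t1).
    have := hsg a aA asg; lra.
  rewrite -mulr_sumr mulrC; apply: ler_wpM2r => //; apply: le_trans g2.
  rewrite [X in _ <= X](bigID (fun a => a \notin sg)) /= lerDl.
  by apply: sumr_ge0 => a _; apply: mulr_ge0; [exact: normc_ge0 | exact: normr_ge0].
have vv0 xi : vv rho xi 0 = 0.
  by rewrite /vv /pairing big1 ?rho00 ?subr0 // => j _; rewrite mxE mul0r.
have Kb0 : 0 <= Kb by have [sg sc _] := (hAc 0).1 h0A; exact: (HKb sg sc).1.
have th0 : 0 < cmin / (Kb + 1) by rewrite divr_gt0 // ltr_wpDl.
have [t0 t00 Ht0] := small_tau dl0 th0.
have P1 : forall tau, 0 < tau < t0 -> forall x, critical_point A c rho tau x ->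
    in_U0 A rho tau x.
  move=> tau /andP[ta tb] x hcr.
  have [t1 hth] := Ht0 tau (ltac:(by rewrite ta tb)).
  have hx := hcr.1.
  split => // a1 a1A a10.
  change (vv rho (xix tau x) a1 < vv rho (xix tau x) 0).
  rewrite vv0 ltNge; apply/negP => ha1.
  set xi := xix tau x.
  have a1s : a1 \in [seq a <- A | a != 0] by rewrite mem_filter a10 a1A.
  have [ast astS astmax] := exists_argmax (vv rho xi) a1s.
  move: (astS); rewrite mem_filter => /andP[ast0 astA].
  have gmax : forall b, b \in A -> vv rho xi b <= vv rho xi ast.
    move=> b bA; case: (eqVneq b 0) => [->|b0].
      rewrite vv0; apply: le_trans ha1 _; exact: astmax.
    by apply: astmax; rewrite mem_filter b0 bA.
  have [sg sc hsg] := Htrop xi ast astA gmax.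
  have asg : ast \in sg.
    apply: contraT => H; have := hsg ast astA H; lra.
  have := Bnd tau x ta t1 hcr ast sg sc hsg ast asg ast0.
  rewrite normc_ww //.
  have -> : expR (LL tau * (vv rho (xix tau x) ast - dl)) =
      expR (LL tau * vv rho (xix tau x) ast) * expR (dl * ln tau).
    by rewrite -expRD /LL; congr expR; ring.
  set E := expR (LL tau * _); set th := expR (dl * ln tau).
  have E0 : 0 < E by apply: expR_gt0.
  rewrite [E * th]mulrC mulrA ler_pM2r // => h1.
  have h2 : Kb * th <= Kb * (cmin / (Kb + 1)) by apply: ler_wpM2l => //; exact: ltW.
  have h3 : Kb * (cmin / (Kb + 1)) = cmin - cmin / (Kb + 1).
    by field; rewrite lt0r_neq0 // ltr_wpDl.
  have := Hcmin ast astA; move: h1 h2 h3 th0; lra.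
split; first by exists t0.
move=> eps eps0.
set C := \sum_(a <- A) (normc (c a) + Kb).
have C0 : 0 <= C by apply: sumr_ge0 => a _; apply: addr_ge0 => //; exact: normc_ge0.
have th1 : 0 < eps / (C + 1) by rewrite divr_gt0 // ltr_wpDl.
have [t1 t10 Ht1] := small_tau dl0 th1.
exists (Num.min t0 t1); first by rewrite lt_min t00 t10.
move=> tau /andP[ta]; rewrite lt_min => /andP[tb tc] x hcr.
have hU := P1 tau (ltac:(by rewrite ta tb)) x hcr.
have [tl1 hth] := Ht1 tau (ltac:(by rewrite ta tc)).
have hx := hcr.1.
set xi := xix tau x.
have neg a : a \in A -> a != 0 -> vv rho xi a < 0.
  by move=> aA a0; rewrite -(vv0 xi); exact: (hU.2 a aA a0).
have gmax : forall b, b \in A -> vv rho xi b <= vv rho xi 0.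
  move=> b bA; rewrite vv0; case: (eqVneq b 0) => [->|b0]; first by rewrite vv0.
  exact: ltW (neg b bA b0).
have [sg sc hsg] := Htrop xi 0 h0A gmax.
set th := expR (dl * ln tau).
have th00 : 0 <= th by apply: expR_ge0.
have eqth : expR (LL tau * (vv rho xi 0 - dl)) = th.
  by rewrite vv0 /th /LL; congr expR; ring.
have bnd a : a \in A -> a != 0 -> normc (ww c rho tau x a) <= (normc (c a) + Kb) * th.
  move=> aA a0; case: (boolP (a \in sg)) => asg.
    have := Bnd tau x ta tl1 hcr 0 sg sc hsg a asg a0; rewrite eqth => h.
    apply: le_trans h _; rewrite mulrDl lerDr; apply: mulr_ge0 => //; exact: normc_ge0.
  rewrite normc_ww // mulrDl -eqth.
  have : normc (c a) * expR (LL tau * vv rho (xix tau x) a) <=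
         normc (c a) * expR (LL tau * (vv rho xi 0 - dl)).
    apply: ler_wpM2l; first exact: normc_ge0.
    rewrite ler_expR; apply: ler_wpM2l; first exact: ltW (LL_gt0 ta tl1).
    have := hsg a aA asg; lra.
  have : 0 <= Kb * expR (LL tau * (vv rho xi 0 - dl)) by apply: mulr_ge0 => //; exact: expR_ge0.
  lra.
have w0 : ww c rho tau x 0 = 1.
  rewrite /ww hnorm // mul1r /monom big1 // => j _; by rewrite mxE expr0z.
have -> : laurent A c rho tau x = \sum_(a <- A) ww c rho tau x a by [].
rewrite (big_rem 0) //= w0 addrC addrK.
apply: le_lt_trans (normc_sum _ _) _.
apply: (@le_lt_trans _ _ (th * C)).
  have Csplit : C = (normc (c 0) + Kb) + \sum_(a <- rem 0 A) (normc (c a) + Kb).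
    by rewrite /C (big_rem 0).
  rewrite Csplit mulrDr -[X in X <= _]add0r; apply: lerD.
    by apply: mulr_ge0 => //; apply: addr_ge0 => //; exact: normc_ge0.
  rewrite mulr_sumr big_seq [X in _ <= X]big_seq; apply: ler_sum => a arem.
  have aA : a \in A by apply: (mem_rem arem).
  have a0 : a != 0.
    by move: arem; rewrite mem_rem_uniq ?fset_uniq // => /andP[].
  by rewrite mulrC; exact: bnd.
have h2 : th * C <= eps / (C + 1) * C by apply: ler_wpM2r => //; exact: ltW.
have h3 : eps / (C + 1) * C = eps - eps / (C + 1).
  by field; rewrite lt0r_neq0 // ltr_wpDl.
move: h2 h3 th1; lra.
Qed.
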